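(* Let $c_1\le\cdots\le c_r$ be integers, let $Y=\mathbb P^1$, and let \[ \pi\colon X=\mathbb P_{\mathbb P^1}(\mathcal O_{\mathbb P^1}\oplus \mathcal O_{\mathbb P^1}(c_1)\oplus \cdots \oplus \mathcal O_{\mathbb P^1}(c_r))\to \mathbb P^1 \] be the projection, a $\mathbb P^r$-bundle over $\mathbb P^1$. If there exists an extremal ray $R$ of $\mathrm{NE}(X)$ such that $K_{X/Y}\cdot R=0$, then $c_1=\cdots =c_r=0$, that is, $X=\mathbb P^r\times \mathbb P^1$ and $\pi$ is the second projection.
   Context: Work over $\mathbb C$. $K_{X/Y}=K_X-\pi^*K_Y$ denotes the relative canonical divisor, $\mathrm{NE}(X)$ the cone of curves of $X$ (spanned by classes of curves in $N_1(X)$), and $X$ with $\pi$ is a toric variety and toric morphism. *)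

(* Defs.v *)
From HB Require Import structures.
From mathcomp Require Import all_boot all_order all_algebra.
Set Implicit Arguments. Unset Strict Implicit. Unset Printing Implicit Defensive.
Import Order.TTheory GRing.Theory Num.Theory.
Local Open Scope ring_scope.

(* Rays are indexed by a finite type T, the lattice N = Z^L has coordinates
   indexed by a finite type L, v t is the primitive generator of ray t, and
   maxc s says that the set of rays s spans a maximal cone of the (smooth,
   complete) fan.  Elements of N_1(X)_R are represented, via the standard
   identification N_1(X)_R = {b in R^T | sum_t b_t v_t = 0} (dual to
   Pic(X)_R = R^T / M_R), as vectors b : T -> R, b_t = D_t . C. *)

(* Class of the torus-invariant curve V(tau), tau = s /\ s' a wall between
   the adjacent maximal cones s, s': the wall relation
   v_t + v_t' + sum_{rho in tau} b_rho v_rho = 0, i.e. b_rho = D_rho . V(tau). *)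
Definition wall_class (R : numDomainType) (T L : finType)
    (v : T -> L -> int) (maxc : {set T} -> Prop) (b : T -> R) : Prop :=
  exists s s' : {set T},
    [/\ maxc s, maxc s', #|s :\: s'| = 1%N & #|s' :\: s| = 1%N] /\
    [/\ (forall t, t \notin s :|: s' -> b t = 0),
        (forall t, t \in s :\: s' -> b t = 1),
        (forall t, t \in s' :\: s -> b t = 1) &
        (forall l, \sum_t b t * (v t l)%:~R = 0)].

Definition NE (R : numDomainType) (T L : finType)
    (v : T -> L -> int) (maxc : {set T} -> Prop) (b : T -> R) : Prop :=
  exists (N : nat) (lam : 'I_N -> R) (w : 'I_N -> T -> R),
    [/\ (forall k, 0 <= lam k), (forall k, wall_class v maxc (w k)) &
        (forall t, b t = \sum_k lam k * w k t)].

Definition extremal_ray (R : numDomainType) (T L : finType)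
    (v : T -> L -> int) (maxc : {set T} -> Prop) (b : T -> R) : Prop :=
  [/\ NE v maxc b, (exists t, b t != 0) &
      forall x y : T -> R, NE v maxc x -> NE v maxc y ->
        (exists mu, 0 <= mu /\ forall t, x t + y t = mu * b t) ->
        (exists a, 0 <= a /\ forall t, x t = a * b t) /\
        (exists a, 0 <= a /\ forall t, y t = a * b t)].

(* Intersection number of the T-invariant divisor sum_t a_t D_t with a class b. *)
Definition dot (R : numDomainType) (T : finType) (a : T -> int) (b : T -> R) : R :=
  \sum_t (a t)%:~R * b t.

Definition canonical (T : finType) : T -> int := fun _ => -1.
Arguments canonical : clear implicits.

(* Toric morphism pi : X -> P^1 induced by the lattice map phi : N -> Z.
   P^1 has rays +1 (divisor D_+) and -1 (divisor D_-); the pullback of the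
   Cartier divisor a_+ D_+ + a_- D_- is sum_t a(t) D_t, with coefficient
   -psi(phi(v_t)) where psi is its support function. *)
Definition pullbackP1 (T L : finType) (v : T -> L -> int) (phi : L -> int)
    (ap am : int) : T -> int :=
  fun t => let y := \sum_l phi l * v t l in
           if (0 <= y)%R then ap * y else am * (- y).

(* K_{X/Y} = K_X - pi^* K_{P^1}, with K_{P^1} = - D_+ - D_-. *)
Definition rel_canonical (T L : finType) (v : T -> L -> int) (phi : L -> int)
    : T -> int :=
  fun t => canonical T t - pullbackP1 v phi (-1) (-1) t.

(* Lattice N = Z^r (fibre coordinates Some i) x Z (base coordinate None).
   Rays: inl None    : v_0 = -(e_1+...+e_r)
         inl (Some i): e_i
         inr true    : e_base
         inr false   : -e_base + sum_i c_i e_i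
   Maximal cones: all fibre rays but one, plus one base ray. *)
Definition Xray (r : nat) := (option 'I_r + bool)%type.
Definition Xlat (r : nat) := option 'I_r.

Definition Xv (r : nat) (c : 'I_r -> int) (t : Xray r) (l : Xlat r) : int :=
  match t, l with
  | inl None, Some _ => -1
  | inl None, None => 0
  | inl (Some i), Some j => (i == j)%:R
  | inl (Some _), None => 0
  | inr true, Some _ => 0
  | inr true, None => 1
  | inr false, Some j => c j
  | inr false, None => -1
  end.

Definition Xmaxcone (r : nat) (s : {set Xray r}) : Prop :=
  exists (j : option 'I_r) (b : bool),
    s = [set t | match t with inl k => k != j | inr b' => b' == b end].

Definition Xphi (r : nat) (l : Xlat r) : int :=
  match l with None => 1 | Some _ => 0 end.

(* Main.v *)
Require Import Defs.
From mathcomp Require Import all_boot all_order all_algebra ring lra.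
Import Order.TTheory GRing.Theory Num.Theory.
Set Implicit Arguments. Unset Strict Implicit.
Local Open Scope ring_scope.

Lemma big_optionT (R : nmodType) (I : finType) (F : option I -> R) :
  \sum_(j : option I) F j = F None + \sum_(i : I) F (Some i).
Proof.
by rewrite ![index_enum _]unlock [@Finite.enum in LHS]unlock /= big_cons big_map.
Qed.

Lemma sumX (R : nmodType) r (F : Xray r -> R) :
  \sum_t F t = F (inl None) + \sum_i F (inl (Some i)) + (F (inr true) + F (inr false)).
Proof. by rewrite big_sumType big_optionT big_bool. Qed.

Lemma rel_dec (R : realFieldType) r (c : 'I_r -> int) (w : Xray r -> R) :
  (forall l, \sum_t w t * (Xv c t l)%:~R = 0) ->
  w (inr true) = w (inr false) /\
  forall i, w (inl (Some i)) = w (inl None) - (c i)%:~R * w (inr false).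
Proof.
move=> H; split.
  have := H None; rewrite sumX /= big1 => [|i _]; last by rewrite mulr0.
  rewrite mulr0 !add0r mulr1 mulrN1 => /eqP; rewrite subr_eq0 => /eqP //.
move=> i; have := H (Some i); rewrite sumX /= (bigD1 i) //= big1 => [|k /negbTE ->]; last by rewrite mulr0.
rewrite eqxx mulr1 mulr0 addr0 => h. apply/eqP; rewrite -subr_eq0 -h; apply/eqP; ring. Qed.


Definition dd r (c : 'I_r -> int) (j : option 'I_r) : int :=
  if j is Some k then c k else 0.

Lemma wall_nonneg (R : realFieldType) r (c : 'I_r -> int) (m : int) (w : Xray r -> R) :
  wall_class (Xv c) (@Xmaxcone r) w -> (forall j, m <= dd c j) ->
  [/\ 0 <= w (inr true), m%:~R * w (inr true) <= w (inl None) &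
      forall l, \sum_t w t * (Xv c t l)%:~R = 0].
Proof.
move=> [s [s' [[Ms Ms' _ _] [h0 h1 h2 hrel]]]] hm.
have [et ei] := rel_dec hrel.
have key : forall t, t \notin s -> 0 <= w t.
  move=> t ts; case ts': (t \in s').
    by rewrite h2 // inE ts ts'.
  by rewrite h0 // inE (negbTE ts) ts'.
case: Ms => j [b Hs].
have hj : inl j \notin s by rewrite Hs inE /= eqxx.
have hb : inr (~~ b) \notin s by rewrite Hs inE /=; case: b {Hs}.
have bpos : 0 <= w (inr true).
  by move: (key _ hb); case: b {Hs hb} => //; rewrite et.
split => //.
move: (key _ hj) (hm j); case: j {Hs hj} => [k|] /=.
  rewrite ei -et subr_ge0 => h1' hk.
  apply: le_trans h1'; apply: ler_wpM2r => //; by rewrite ler_int.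
move=> hw hm0; apply: le_trans hw.
by rewrite mulr_le0_ge0 // lerz0.
Qed.

Lemma NE_props (R : realFieldType) r (c : 'I_r -> int) (m : int) (b : Xray r -> R) :
  NE (Xv c) (@Xmaxcone r) b -> (forall j, m <= dd c j) ->
  [/\ 0 <= b (inr true), m%:~R * b (inr true) <= b (inl None) &
      forall l, \sum_t b t * (Xv c t l)%:~R = 0].
Proof.
move=> [N [lam [w [hl hw hb]]]] hm.
have P k := wall_nonneg (hw k) hm.
split.
- rewrite hb; apply: sumr_ge0 => k _; apply: mulr_ge0 => //; by case: (P k).
- rewrite !hb mulr_sumr -subr_ge0 -sumrB; apply: sumr_ge0 => k _.
  rewrite mulrCA -mulrBr; apply: mulr_ge0 => //; rewrite subr_ge0; by case: (P k).
- move=> l; under eq_bigr do rewrite hb mulr_suml.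
  rewrite exchange_big /=; apply: big1 => k _.
  under eq_bigr do rewrite -mulrA.
  rewrite -mulr_sumr; case: (P k) => _ _ ->; by rewrite mulr0.
Qed.

Definition fv (R : realFieldType) {r : nat} : Xray r -> R := fun t => if t is inl _ then 1 else 0.
Definition gv (R : realFieldType) r (c : 'I_r -> int) (m : int) : Xray r -> R :=
  fun t => match t with inl None => m%:~R | inl (Some i) => (m - c i)%:~R | inr _ => 1 end.

Lemma decomp (R : realFieldType) r (c : 'I_r -> int) (m : int) (b : Xray r -> R) :
  (forall l, \sum_t b t * (Xv c t l)%:~R = 0) ->
  forall t, b t = (b (inl None) - m%:~R * b (inr true)) * fv R t + b (inr true) * gv R c m t.
Proof.
move=> /rel_dec [et ei] [[i|]|[]] /=; rewrite ?ei -?et; ring.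
Qed.

Definition cone r (j : option 'I_r) (b : bool) : {set Xray r} :=
  [set t | match t with inl k => k != j | inr b' => b' == b end].

Lemma f_wall (R : realFieldType) r (c : 'I_r -> int) (i0 : 'I_r) :
  wall_class (Xv c) (@Xmaxcone r) (fv R).
Proof.
exists (cone None true), (cone (Some i0) true); split.
  split; [by exists None, true | by exists (Some i0), true | |].
    suff -> : cone None true :\: cone (Some i0) true = [set inl (Some i0)] by rewrite cards1.
    by apply/setP => [[[k|]|[]]]; rewrite !inE /= ?andbT ?negbK.
  suff -> : cone (Some i0) true :\: cone None true = [set inl None] by rewrite cards1.
  by apply/setP => [[[k|]|[]]]; rewrite !inE.
split.
- by move=> [[k|]|[]]; rewrite !inE.
- by move=> [[k|]|[]]; rewrite !inE.
- by move=> [[k|]|[]]; rewrite !inE.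
- move=> [i|]; rewrite sumX /=.
  + rewrite (bigD1 i) //= big1 => [|k /negbTE ->]; last by rewrite mulr0.
    rewrite eqxx (_ : true%:R = 1 :> int) //; ring.
  + under eq_bigr do rewrite mulr0.
    rewrite big1_eq; ring.
Qed.

Lemma g_wall (R : realFieldType) r (c : 'I_r -> int) (j0 : option 'I_r) :
  wall_class (Xv c) (@Xmaxcone r) (gv R c (dd c j0)).
Proof.
exists (cone j0 true), (cone j0 false); split.
  split; [by exists j0, true | by exists j0, false | |].
    suff -> : cone j0 true :\: cone j0 false = [set inr true] by rewrite cards1.
    by apply/setP => [[k|[]]]; rewrite !inE /= ?andbN ?andNb.
  suff -> : cone j0 false :\: cone j0 true = [set inr false] by rewrite cards1.
  by apply/setP => [[k|[]]]; rewrite !inE /= ?andbN ?andNb.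
split.
- move=> [k|[]]; rewrite !inE /= ?orbT //= orbb negbK => /eqP ->.
  by case: j0 => [k'|] /=; rewrite ?subrr.
- by move=> [[k|]|[]]; rewrite !inE /= ?andbF ?andNb.
- by move=> [[k|]|[]]; rewrite !inE /= ?andbF ?andNb.
- move=> [i|]; rewrite sumX /=.
  + rewrite (bigD1 i) //= big1 => [|k /negbTE ->]; last by rewrite mulr0.
    rewrite eqxx (_ : true%:R = 1 :> int) //; ring.
  + under eq_bigr do rewrite mulr0.
    rewrite big1_eq; ring.
Qed.

Lemma relK r (c : 'I_r -> int) t :
  rel_canonical (Xv c) (@Xphi r) t = if t is inl _ then -1 else 0.
Proof.
rewrite /rel_canonical /pullbackP1 /canonical big_optionT /=.
under eq_bigr do rewrite mul0r.
rewrite big1_eq addr0 mul1r.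
by case: t => [[k|]|[]].
Qed.

Lemma dot_val (R : realFieldType) r (c : 'I_r -> int) (b : Xray r -> R) :
  dot (rel_canonical (Xv c) (@Xphi r)) b = -(b (inl None) + \sum_i b (inl (Some i))).
Proof.
rewrite /dot; under eq_bigr do rewrite relK.
rewrite sumX /=; under eq_bigr do rewrite mulN1r.
rewrite sumrN !mul0r !addr0 mulN1r opprD.
done.
Qed.

Theorem lemma3p1 (R : realFieldType) (r : nat) (c : 'I_r -> int) :
  (forall i j : 'I_r, (i <= j)%N -> c i <= c j) ->
  (exists b : Xray r -> R,
     extremal_ray (Xv c) (@Xmaxcone r) b /\
     dot (rel_canonical (Xv c) (@Xphi r)) b = 0) ->
  forall i : 'I_r, c i = 0.
Proof.
move=> hord [b [[NEb [t0 bt0] ext] hdot]] i.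
have [j0 hj0] : exists j0, forall j, dd c j0 <= dd c j.
  have r0 : (0 < r)%N by apply: leq_ltn_trans (ltn_ord i).
  pose k0 : 'I_r := Ordinal r0.
  have hk k : c k0 <= c k by apply: hord.
  case: (lerP 0 (c k0)) => h.
    exists None => [[k|]] //=; exact: le_trans h (hk k).
  by exists (Some k0) => [[k|]] /=; [exact: hk | exact: ltW].
set m := dd c j0 in hj0.
have [hbT hbN hrel] := NE_props NEb hj0.
have dec := decomp m hrel.
set be := b (inr true) in hbT hbN dec.
set al := b (inl None) - m%:~R * be in dec.
have alpos : 0 <= al by rewrite /al subr_ge0.
pose K : int := - (\sum_i (m - c i)) - m.
have hd : dot (rel_canonical (Xv c) (@Xphi r)) b = - (al * (r.+1)%:R) + be * K%:~R.
  rewrite dot_val (dec (inl None)); under eq_bigr do rewrite dec /=.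
  rewrite big_split /= -mulr_sumr sumr_const card_ord /K rmorphB rmorphN rmorph_sum /=.
  rewrite -mulr_sumr -mulr_natr -natr1; ring.
have NEx : NE (Xv c) (@Xmaxcone r) (fun t => al * fv R t).
  exists 1%N, (fun _ => al), (fun _ => fv R); split => // [_ | t]; [exact: f_wall i | by rewrite big_ord1].
have NEy : NE (Xv c) (@Xmaxcone r) (fun t => be * gv R c m t).
  exists 1%N, (fun _ => be), (fun _ => gv R c m); split => // [_ | t]; [exact: g_wall | by rewrite big_ord1].
case: (ext _ _ NEx NEy) => [|[a [ha hx]] _].
  by exists 1; split => // t; rewrite mul1r -dec.
have b0 : al = 0 -> be = 0 -> False.
  by move=> h1 h2; move: bt0; rewrite dec h1 h2 !mul0r addr0 eqxx.
have al0 : al = 0.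
  move: (hx (inr true)) => /=; rewrite mulr0 => /esym/eqP; rewrite mulf_eq0 => /orP [/eqP a0 | /eqP be0].
  - by move: (hx (inl None)); rewrite /= a0 mul0r mulr1.
  - move: hdot; rewrite hd /be be0 mul0r addr0 => /eqP; rewrite oppr_eq0 mulf_eq0 pnatr_eq0 orbF.
    by move/eqP.
have beK : be * K%:~R = 0 by move: hdot; rewrite hd al0 mul0r oppr0 add0r.
have K0 : K = 0.
  move: beK => /eqP; rewrite mulf_eq0 => /orP [/eqP be0|]; first by exfalso; exact: b0 al0 be0.
  by rewrite intr_eq0 => /eqP.
have hm0 : m <= 0 by exact: (hj0 None).
have hmc k : m <= c k by exact: (hj0 (Some k)).
have : \sum_k (c k - m) + (- m) == 0.
  suff -> : \sum_k (c k - m) + (- m) = K by rewrite K0.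
  by rewrite /K -sumrN; congr (_ - _); apply: eq_bigr => k _; rewrite opprB.
rewrite paddr_eq0 ?sumr_ge0 ?oppr_ge0 // => [|k _]; last by rewrite subr_ge0.
case/andP => /eqP hs; rewrite oppr_eq0 => /eqP m0.
have hge : forall k, predT k -> 0 <= c k - m by move=> k _; rewrite subr_ge0.
have := @psumr_eq0P _ _ _ _ hge hs i isT.
by move/eqP; rewrite subr_eq0 m0 => /eqP.
Qed.
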